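(* Let $T$ be a tree on $n$ vertices with costs $c:V(T)\to\mathbb{R}_{>0}$ normalized so that $\max_{v\in V(T)}c(v)=1$. Let $\mathcal{T}$ be a subtree of $T$ and let $0<a<b$ be such that $c(v)\le b$ for all $v\in V(\mathcal{T})$ and $2a\ge b$. Assume that either $b\le 1/\log n$, or $c(v)>a$ for every $v\in V(\mathcal{T})$. Let $D$ be the ranking-based decision tree of $\mathcal{T}$. Then $\texttt{COST}_D(\mathcal{T},c)\le 2\cdot\texttt{OPT}(T,c)$.
   Context: Search model: a query to $v$ costs $c(v)$ and returns either that $v$ is the target $x$ or the component of $T-v$ containing $x$. A decision tree for a tree $T$ is (recursively) a rooted tree whose root is a vertex $v$ of $T$ and whose root subtrees are decision trees for the components of $T-v$, one per component. $\texttt{COST}_D(T,c)$ is the maximum over $x\in V(T)$ of the total cost of the vertices on the root-to-$x$ path in $D$; $\texttt{OPT}(T,c)$ is the minimum cost over all decision trees for $T$. A vertex ranking of a tree is a labeling $l$ of its vertices by positive integers such that whenever $u\ne v$ and $l(u)=l(v)$, some vertex $z$ on the path strictly between $u$ and $v$ has $l(z)>l(v)$. The ranking-based decision tree of a tree $\mathcal{T}$ is obtained from a vertex ranking of $\mathcal{T}$ using the minimum possible number of distinct labels: query the unique vertex $z$ with largest label as the root, and below it attach, recursively, the decision trees so obtained (with the restricted labeling) for each component of $\mathcal{T}-z$. Logarithms are base 2. *)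

(* Defs.v *)
From HB Require Import structures.
From mathcomp Require Import all_boot all_order all_algebra.
From mathcomp Require Import reals exp.
Set Implicit Arguments. Unset Strict Implicit. Unset Printing Implicit Defensive.
Import Order.TTheory GRing.Theory Num.Theory.

Section Defs.
Variable V : finType.

Definition is_tree (adj : rel V) : Prop :=
  [/\ symmetric adj, irreflexive adj,
      (forall x y, connect adj x y) &
      (forall s : seq V, uniq s -> 2 < size s -> ~~ cycle adj s)].

Definition restr (adj : rel V) (A : {set V}) : rel V :=
  [rel x y | [&& x \in A, y \in A & adj x y]].

Definition is_subtree (adj : rel V) (S : {set V}) : Prop :=
  S != set0 /\ (forall x y, x \in S -> y \in S -> connect (restr adj S) x y).

Definition comps (adj : rel V) (A : {set V}) : {set {set V}} :=
  [set [set y in A | connect (restr adj A) x y] | x in A].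

Inductive dtree : Type := Node : V -> seq dtree -> dtree.

Fixpoint dverts (D : dtree) : seq V :=
  match D with Node v ch => v :: flatten (map dverts ch) end.

Definition dset (D : dtree) : {set V} := [set x | x \in dverts D].

(* Generic well-formedness: D is a decision tree for A (root in A, children
   are decision trees for the components of A - root, one per component),
   and every node v with current vertex set B satisfies [P v B]. *)
Fixpoint dtree_ok (adj : rel V) (P : V -> {set V} -> bool)
    (A : {set V}) (D : dtree) : bool :=
  match D with
  | Node v ch =>
    [&& v \in A, P v A,
        perm_eq (map dset ch) (enum (comps adj (A :\ v))) &
        all (fun d => dtree_ok adj P (dset d) d) ch]
  end.

Definition is_dtree (adj : rel V) (A : {set V}) (D : dtree) : bool :=
  dtree_ok adj (fun _ _ => true) A D.

Fixpoint dpath (D : dtree) (x : V) : seq V :=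
  match D with
  | Node v ch =>
    v :: (if v == x then [::]
          else flatten (map (fun d => if x \in dverts d then dpath d x else [::]) ch))
  end.

Definition dcost (R : realType) (c : V -> R) (A : {set V}) (D : dtree) : R :=
  \big[Num.max/0%R]_(x in A) (\sum_(u <- dpath D x) c u)%R.

(* vertex ranking of the subtree S (paths taken in the tree adj) *)
Definition is_ranking (adj : rel V) (S : {set V}) (l : V -> nat) : Prop :=
  (forall x, x \in S -> 0 < l x) /\
  (forall u v, u \in S -> v \in S -> u != v -> l u = l v ->
     exists (p : seq V) (z : V),
       [/\ path adj u p, last u p = v, uniq (u :: p),
           (z \in p) && (z != v) & l v < l z]).

Definition nlabels (S : {set V}) (l : V -> nat) : nat :=
  size (undup [seq l x | x <- enum S]).

Definition is_opt_ranking (adj : rel V) (S : {set V}) (l : V -> nat) : Prop :=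
  is_ranking adj S l /\
  (forall l', is_ranking adj S l' -> nlabels S l <= nlabels S l').

(* the ranking-based decision tree of S w.r.t. the ranking l: root is the
   (unique) vertex of largest label, recursively on components *)
Definition is_rank_dtree (adj : rel V) (l : V -> nat) (S : {set V}) (D : dtree)
  : bool :=
  dtree_ok adj (fun v B => [forall x in B, (x != v) ==> (l x < l v)]) S D.

End Defs.

(* Main.v *)
Require Import Defs.
From HB Require Import structures.
From mathcomp Require Import all_boot all_order all_algebra.
From mathcomp Require Import reals exp.
From mathcomp Require Import zify lra.
Import Order.TTheory GRing.Theory Num.Theory.
Set Implicit Arguments. Unset Strict Implicit. Unset Printing Implicit Defensive.

Section Graph.
Variable V : finType.
Variable adj : rel V.
Hypothesis adj_sym : symmetric adj.

Definition cls (B : {set V}) x := [set y in B | connect (restr adj B) x y].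
Definition connected (B : {set V}) :=
  forall x y, x \in B -> y \in B -> connect (restr adj B) x y.

Lemma restr_sym (B : {set V}) : symmetric (restr adj B).
Proof. by move=> x y; rewrite /restr /= adj_sym; case: (x \in B); case: (y \in B). Qed.

Lemma restr_csym (B : {set V}) : connect_sym (restr adj B).
Proof. exact: sym_connect_sym (@restr_sym B). Qed.

Lemma restr_mono (A B : {set V}) x y : A \subset B ->
  connect (restr adj A) x y -> connect (restr adj B) x y.
Proof.
move=> sAB; apply: connect_sub => u w /= /and3P[uA wA e]; apply: connect1.
by rewrite /restr /= (subsetP sAB u uA) (subsetP sAB w wA) e.
Qed.

Lemma cls_in (B : {set V}) x : x \in B -> x \in cls B x.
Proof. by move=> xB; rewrite inE xB connect0. Qed.

Lemma cls_sub (B : {set V}) x : cls B x \subset B.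
Proof. by apply/subsetP => y; rewrite inE => /andP[]. Qed.

Lemma cls_eq (B : {set V}) x y : y \in cls B x -> cls B y = cls B x.
Proof.
rewrite inE => /andP[yB cxy]; apply/setP => z; rewrite !inE.
case: (z \in B) => //=; apply/idP/idP => h.
  exact: connect_trans cxy h.
by rewrite restr_csym in cxy; exact: connect_trans cxy h.
Qed.

Lemma cls_comps (B : {set V}) x : x \in B -> cls B x \in comps adj B.
Proof. by move=> xB; apply/imsetP; exists x. Qed.

Lemma comps_cls (B K : {set V}) : K \in comps adj B -> exists2 x, x \in B & K = cls B x.
Proof. by case/imsetP => x xB ->; exists x. Qed.

Lemma comps_sub (B K : {set V}) : K \in comps adj B -> K \subset B.
Proof. by case/comps_cls => x _ ->; apply: cls_sub. Qed.

Lemma comps_disj (B K1 K2 : {set V}) x : K1 \in comps adj B -> K2 \in comps adj B ->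
  x \in K1 -> x \in K2 -> K1 = K2.
Proof.
case/comps_cls => x1 _ -> /comps_cls [x2 _ ->] h1 h2.
by rewrite -(cls_eq h1) -(cls_eq h2).
Qed.

Lemma cls_closed (B : {set V}) x y z : y \in cls B x -> restr adj B y z -> z \in cls B x.
Proof.
rewrite !inE => /andP[yB cxy] /and3P[_ zB e]; rewrite zB /=.
by apply: connect_trans cxy (connect1 _); rewrite /restr /= yB zB e.
Qed.

Lemma path_restr_in (B : {set V}) x p : path (restr adj B) x p -> {subset p <= B}.
Proof.
elim: p x => //= y p IH x /andP[/and3P[_ yB _] pp] z; rewrite inE.
by case/orP => [/eqP -> //| /(IH _ pp)].
Qed.

Lemma path_restr_mem (B K : {set V}) x p : path (restr adj B) x p -> x \in K ->
  {subset p <= K} -> path (restr adj K) x p.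
Proof.
elim: p x => //= y p IH x /andP[/and3P[_ _ e] pp] xK sK.
have yK : y \in K by apply: sK; rewrite mem_head.
rewrite /restr /= xK yK e /=; apply: IH => // z zp; apply: sK; rewrite inE zp orbT.
by [].
Qed.

Lemma path_restr_closed (B K : {set V}) x p : path (restr adj B) x p -> x \in K ->
  (forall y z, y \in K -> restr adj B y z -> z \in K) -> path (restr adj K) x p.
Proof.
elim: p x => //= y p IH x /andP[e pp] xK cl.
have yK := cl _ _ xK e.
case/and3P: e => _ _ e; rewrite /restr /= xK yK e /=; exact: IH.
Qed.

Lemma cls_connected (B : {set V}) x : x \in B -> connected (cls B x).
Proof.
move=> xB.
suff H : forall y, y \in cls B x -> connect (restr adj (cls B x)) x y.
  move=> y z /H xy /H xz; rewrite restr_csym in xy; exact: connect_trans xy xz.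
move=> y; rewrite inE => /andP[_ /connectP [p pth ->]].
apply/connectP; exists p => //; apply: path_restr_closed pth (cls_in xB) _.
by move=> u w; apply: cls_closed.
Qed.

Lemma comps_connected (B K : {set V}) : K \in comps adj B -> connected K.
Proof. by case/comps_cls => x xB ->; apply: cls_connected. Qed.

Hypothesis adj_acyc : forall s : seq V, uniq s -> 2 < size s -> ~~ cycle adj s.

Lemma two_nbrs (B : {set V}) v x y : v \notin B -> x != y -> adj v x -> adj v y -> x \in B ->
  connect (restr adj B) x y -> False.
Proof.
move=> vB xy avx avy xB /connectP [p pth ey].
case/shortenP: pth ey => p' pth' up' _ ey.
have sub := path_restr_in pth'.
apply: (negP (adj_acyc (s := v :: x :: p') _ _)).
- rewrite cons_uniq up' andbT inE negb_or; apply/andP; split.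
    by apply/eqP => E; rewrite E xB in vB.
  by apply/negP => /sub; rewrite (negbTE vB).
- case: p' pth' up' sub ey => [|z p'] /=; first by move=> _ _ _ E; rewrite E eqxx in xy.
  by [].
- rewrite /cycle /= avx /= rcons_path -ey adj_sym avy andbT.
  by apply: sub_path pth' => u w /and3P[].
Qed.

Lemma nbr (B C : {set V}) v y : v \in B -> C \subset B :\ v ->
  (forall z z', z \in C -> restr adj (B :\ v) z z' -> z' \in C) -> y \in C ->
  connect (restr adj B) y v -> exists2 u, u \in C & adj u v.
Proof.
move=> vB sC cl yC /connectP [p pth E].
elim: p y pth yC E => [|z p IH] y /=.
  move=> _ yC E; move: (subsetP sC y yC); rewrite E !inE eqxx //.
case/andP => /and3P[yB zB e] pp yC E.
case: (eqVneq z v) => [zv|zv]; first by exists y => //; rewrite -zv.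
have yBv := subsetP sC y yC.
have zC : z \in C by apply: (cl y) => //; rewrite /restr /= yBv !inE zv zB e.
exact: IH pp zC E.
Qed.

Definition fmax (S : {set V}) v := \max_(K in comps adj (S :\ v)) #|K|.

Lemma centroid (S : {set V}) x0 : connected S -> x0 \in S ->
  exists2 v, v \in S & forall K, K \in comps adj (S :\ v) -> 2 * #|K| <= #|S|.
Proof.
move=> Sc x0S.
case: (arg_minnP (fmax S) x0S) => v vS vmin.
have {}vS : v \in S by [].
exists v => // K KC; rewrite leqNgt; apply/negP => big.
have [y yS Ky] := comps_cls KC.
have clK : forall z z', z \in K -> restr adj (S :\ v) z z' -> z' \in K.
  by move=> z z'; rewrite Ky; apply: cls_closed.
have yK : y \in K by rewrite Ky cls_in.
have sKS : K \subset S :\ v by apply: comps_sub KC.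
have [u uK auv] := nbr vS sKS clK yK (Sc _ _ (subsetP (subsetDl _ _) y yS) vS).
have uSv := subsetP sKS u uK.
have uS : u \in S by move: uSv; rewrite !inE => /andP[].
have uv : u != v by move: uSv; rewrite !inE => /andP[].
have Ku : K = cls (S :\ v) u by rewrite Ky (@cls_eq _ y u) // -Ky.
have vSu : v \in S :\ u by rewrite !inE vS andbT eq_sym.
suff : fmax S u < #|K|.
  by move: (vmin u uS); rewrite /fmax => h1 h2;
     have := @leq_bigmax_cond _ (fun K => K \in comps adj (S :\ v)) (fun K : {set V} => #|K|) K KC; lia.
have K0 : 0 < #|K| by apply/card_gt0P; exists u.
suff : fmax S u <= #|K|.-1 by lia.
apply/bigmax_leqP => K' K'C.
have [w wS K'w] := comps_cls K'C.
have sK' : K' \subset S :\ u by apply: comps_sub K'C.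
case vK' : (v \in K').
- have sub : K' \subset S :\: K.
    apply/subsetP => z zK'.
    have zSu := subsetP sK' z zK'.
    rewrite inE; move: (zSu); rewrite !inE => /andP[zu zS]; rewrite zS andbT.
    apply/negP => zK.
    have K'z : K' = cls (S :\ u) z by rewrite K'w (@cls_eq _ w z) // -K'w.
    have czv : connect (restr adj (S :\ u)) z v.
      by move: vK'; rewrite K'z inE => /andP[].
    set C := cls ((S :\ u) :\ v) z.
    have zSv := subsetP sKS z zK.
    have zC : z \in C.
      apply: cls_in; rewrite !inE; move: zSv zSu; rewrite !inE.
      by case/andP => -> -> /andP[-> _].
    have [w' w'C aw'v] := nbr vSu (cls_sub _ _) (fun a b h => @cls_closed _ _ _ _ h) zC czv.
    have w'S := subsetP (cls_sub _ _) w' w'C.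
    apply: (@two_nbrs (S :\ v) v u w').
    + by rewrite !inE eqxx.
    + by apply: contraTneq w'S => <-; rewrite !inE eqxx /= andbF.
    + by rewrite adj_sym.
    + by rewrite adj_sym.
    + exact: uSv.
    + apply: (@connect_trans _ _ z).
        by move: zK; rewrite Ku inE => /andP[_ ->].
      move: w'C; rewrite inE => /andP[_ h]; apply: restr_mono h.
      by apply/subsetP => q; rewrite !inE => /andP[-> /andP[_ ->]].
  have KS : K \subset S by apply: subset_trans sKS (subsetDl _ _).
  have := subset_leq_card sub; rewrite cardsD (setIidPr KS) => h.
  by move: h big K0; clear; lia.
- have sub : K' \subset K :\ u.
    apply/subsetP => z zK'.
    have zSu := subsetP sK' z zK'.
    have zv : z != v by apply/negP => /eqP E; rewrite -E zK' in vK'.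
    have zSv : z \in S :\ v by move: zSu; rewrite !inE zv => /andP[_ ->].
    set C := cls (S :\ v) z.
    case uC : (u \in C).
      have CK : C = K by apply: comps_disj (cls_comps zSv) KC uC uK.
      rewrite !inE -CK cls_in // andbT.
      by move: zSu; rewrite !inE => /andP[].
    have zC : z \in C by apply: cls_in.
    have [w' w'C aw'v] := nbr vS (cls_sub _ _) (fun a b h => @cls_closed _ _ _ _ h) zC
       (Sc _ _ (subsetP (subsetDl _ _) z zSv) vS).
    have CSu : C \subset S :\ u.
      apply/subsetP => q qC; have := subsetP (cls_sub _ _) q qC.
      rewrite !inE => /andP[_ ->]; rewrite andbT.
      by apply/negP => /eqP E; rewrite -E qC in uC.
    have czw : connect (restr adj (S :\ u)) z w'.
      by apply: restr_mono CSu _; apply: cls_connected.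
    have czv : connect (restr adj (S :\ u)) z v.
      apply: connect_trans czw (connect1 _).
      by rewrite /restr /= (subsetP CSu w' w'C) vSu aw'v.
    have K'z : K' = cls (S :\ u) z by rewrite K'w (@cls_eq _ w z) // -K'w.
    by move: vK'; rewrite K'z inE vSu czv.
  have := subset_leq_card sub; have := cardsD1 u K; rewrite uK => h1 h2.
  by move: h1 h2; clear; lia.
Qed.

End Graph.


Section DT.
Variable V : finType.
Variable adj : rel V.
Hypothesis adj_sym : symmetric adj.

Definition dtree_ind2 (P : dtree V -> Prop)
  (H : forall v ch, (forall d, List.In d ch -> P d) -> P (Node v ch)) :
  forall D, P D :=
  fix F D := match D with
  | Node v ch => H v ch
     ((fix G (l : seq (dtree V)) : forall d, List.In d l -> P d :=
        match l with
        | [::] => fun d (h : List.In d [::]) => match h with end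
        | d0 :: l' => fun d h => match h with
            | or_introl E => match E in _ = d1 return P d1 with erefl => F d0 end
            | or_intror h' => G l' d h'
            end
        end) ch)
  end.

Lemma all_In (T : Type) (f : pred T) s x : all f s -> List.In x s -> f x.
Proof. elim: s => //= y s IH /andP[fy fs] [<- //|]; exact: IH. Qed.

Lemma In_all (T : Type) (f : pred T) s : (forall x, List.In x s -> f x) -> all f s.
Proof. elim: s => //= y s IH h; rewrite h /=; [apply: IH => x hx|]; auto. Qed.

Lemma In_mem (T : eqType) (x : T) s : List.In x s -> x \in s.
Proof.
elim: s => //= y s IH [->|h]; first by rewrite inE eqxx.
by rewrite inE IH ?orbT.
Qed.

Lemma mem_In (T : eqType) (x : T) s : x \in s -> List.In x s.
Proof. elim: s => //= y s IH; rewrite inE => /orP[/eqP ->|h]; auto. Qed.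

Lemma dsetE (d : dtree V) x : (x \in dset d) = (x \in dverts d).
Proof. by rewrite inE. Qed.

Variable P : V -> {set V} -> bool.

Lemma ok_child A v ch d : dtree_ok adj P A (Node v ch) -> List.In d ch ->
  dset d \in comps adj (A :\ v) /\ dtree_ok adj P (dset d) d.
Proof.
case/and4P => _ _ pe al hd; split; last exact: (all_In al hd).
rewrite -mem_enum -(perm_mem pe); apply: In_mem; exact: (List.in_map (@dset V) ch d hd).
Qed.

Lemma ok_root A v ch : dtree_ok adj P A (Node v ch) -> v \in A /\ P v A.
Proof. by case/and4P. Qed.

Lemma ok_uniq A v ch : dtree_ok adj P A (Node v ch) -> uniq (map (@dset V) ch).
Proof. by case/and4P => _ _ pe _; rewrite (perm_uniq pe) enum_uniq. Qed.

Lemma child_sub A v ch d x : dtree_ok adj P A (Node v ch) -> List.In d ch ->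
  x \in dverts d -> x \in A :\ v.
Proof.
move=> ok hd xd; have [cd _] := ok_child ok hd.
by apply: (subsetP (comps_sub cd)); rewrite dsetE.
Qed.

Lemma child_of A v ch x : dtree_ok adj P A (Node v ch) -> x \in A -> x != v ->
  exists d, List.In d ch /\ x \in dverts d.
Proof.
case/and4P => _ _ pe _ xA xv.
have xAv : x \in A :\ v by rewrite !inE xv xA.
have : cls adj (A :\ v) x \in map (@dset V) ch.
  by rewrite (perm_mem pe) mem_enum cls_comps.
move/mem_In/List.in_map_iff => [d [dE hd]]; exists d; split => //.
by rewrite -dsetE dE cls_in.
Qed.

Lemma in_flat (T : eqType) (f : dtree V -> seq T) ch x :
  x \in flatten (map f ch) -> exists d, List.In d ch /\ x \in f d.
Proof.
elim: ch => //= d ch IH; rewrite mem_cat => /orP[h|/IH [d' [h1 h2]]].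
  by exists d; split; auto.
by exists d'; split; auto.
Qed.

Lemma ok_sub A D x : dtree_ok adj P A D -> x \in dverts D -> x \in A.
Proof.
case: D => v ch ok; rewrite /= inE => /orP[/eqP ->|]; first by case: (ok_root ok).
by case/in_flat => d [hd xd]; move: (child_sub ok hd xd); rewrite !inE => /andP[_ ->].
Qed.

Lemma ok_cover A D x : dtree_ok adj P A D -> x \in A -> x \in dverts D.
Proof.
case: D => v ch ok xA; rewrite /= inE; case: (eqVneq x v) => //= xv.
have [d [hd xd]] := child_of ok xA xv.
elim: ch hd {ok} => //= d0 ch IH [->|h]; rewrite mem_cat ?xd //.
by rewrite IH ?orbT.
Qed.

Lemma ok_dset A D : dtree_ok adj P A D -> dset D = A.
Proof.
move=> ok; apply/setP => x; rewrite dsetE; apply/idP/idP.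
  exact: ok_sub. exact: ok_cover.
Qed.

Lemma flat_nil (ch : seq (dtree V)) x :
  (forall d, List.In d ch -> x \notin dverts d) ->
  flatten (map (fun d => if x \in dverts d then dpath d x else [::]) ch) = [::].
Proof.
elim: ch => //= d ch IH h; rewrite (negbTE (h d (or_introl erefl))) /=.
apply: IH => d' hd'; apply: h; auto.
Qed.

Lemma flat_one (ch : seq (dtree V)) d x : uniq (map (@dset V) ch) ->
  (forall d1 d2, List.In d1 ch -> List.In d2 ch -> x \in dverts d1 ->
     x \in dverts d2 -> dset d1 = dset d2) ->
  List.In d ch -> x \in dverts d ->
  flatten (map (fun d => if x \in dverts d then dpath d x else [::]) ch) = dpath d x.
Proof.
elim: ch => //= d0 ch IH /andP[nd0 u] dj hd xd.
have notin : forall d', List.In d' ch -> x \in dverts d' -> dset d' = dset d0 -> False.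
  move=> d' hd' _ E; move: nd0; rewrite -E.
  by move/negP; apply; apply: In_mem; apply: (List.in_map (@dset V)).
case: hd => [E|hd].
  subst d0; rewrite xd flat_nil ?cats0 // => d' hd'; apply/negP => xd'.
  exact: (notin d' hd' xd' (dj _ _ (or_intror hd') (or_introl erefl) xd' xd)).
have xd0 : x \notin dverts d0.
  apply/negP => xd0; exact: (notin d hd xd (dj _ _ (or_intror hd) (or_introl erefl) xd xd0)).
rewrite (negbTE xd0) /=; apply: IH => //.
move=> d1 d2 h1 h2; apply: dj; auto.
Qed.

Lemma child_or (ch : seq (dtree V)) x :
    (exists d, List.In d ch /\ x \in dverts d) \/
    (forall d, List.In d ch -> x \notin dverts d).
Proof.
elim: ch => [|d0 ch' IH]; first by right => ? [].
case xd0 : (x \in dverts d0).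
  by left; exists d0; split => //; left.
case: IH => [[d [hd xd]]|IH].
  by left; exists d; split => //; right.
by right => d [<-|h]; [rewrite xd0 | exact: IH].
Qed.

Lemma dpath_child A v ch d x : dtree_ok adj P A (Node v ch) -> List.In d ch ->
  x \in dverts d -> dpath (Node v ch) x = v :: dpath d x.
Proof.
move=> ok hd xd; have := child_sub ok hd xd; rewrite !inE => /andP[xv _].
rewrite /= eq_sym (negbTE xv); congr (_ :: _).
apply: flat_one => //; first exact: ok_uniq ok.
move=> d1 d2 h1 h2 x1 x2.
have [c1 _] := ok_child ok h1; have [c2 _] := ok_child ok h2.
by apply: (@comps_disj _ _ adj_sym _ _ _ x c1 c2); rewrite dsetE.
Qed.

Lemma dpath_cases A v ch x : dtree_ok adj P A (Node v ch) ->
  dpath (Node v ch) x = [:: v] \/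
  exists d, [/\ List.In d ch, x \in dverts d, v != x &
                dpath (Node v ch) x = v :: dpath d x].
Proof.
move=> ok; case: (child_or ch x) => [[d [hd xd]]|none].
  right; exists d; split => //; last exact: dpath_child ok hd xd.
  by have := child_sub ok hd xd; rewrite !inE eq_sym => /andP[].
by left; rewrite /=; case: (v == x) => //; rewrite flat_nil.
Qed.

Lemma dpath_in A D x : dtree_ok adj P A D -> x \in A -> x \in dpath D x.
Proof.
elim/dtree_ind2: D A => v ch IH A ok xA.
case: (eqVneq x v) => [->|xv]; first by rewrite /= eqxx mem_head.
have [d [hd xd]] := child_of ok xA xv.
rewrite (dpath_child ok hd xd) inE; apply/orP; right.
have [_ okd] := ok_child ok hd; apply: IH okd _ => //; by rewrite dsetE.
Qed.

Lemma dpath_sub A D x : dtree_ok adj P A D -> {subset dpath D x <= A}.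
Proof.
elim/dtree_ind2: D A => v ch IH A ok.
have [vA _] := ok_root ok.
case: (dpath_cases x ok) => [->|[d [hd xd _ ->]]] y; rewrite inE.
  by move/eqP ->.
case/orP => [/eqP -> //|yd].
have [_ okd] := ok_child ok hd; have := IH d hd _ okd y yd.
by move/(subsetP (comps_sub (proj1 (ok_child ok hd)))); rewrite !inE => /andP[].
Qed.

End DT.


Section Rank.
Variable V : finType.
Variable adj : rel V.
Hypothesis adj_sym : symmetric adj.
Variable P : V -> {set V} -> bool.
Variable S : {set V}.

Definition cnt (D : dtree V) x := count (mem S) (dpath D x).

Lemma upath (B : {set V}) u v : connect (restr adj B) u v ->
  exists p, [/\ path (restr adj B) u p, last u p = v & uniq (u :: p)].
Proof.
case/connectP => p0 pth0 ->; case: (shortenP pth0) => p pth up _.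
by exists p.
Qed.

Lemma cnt_pos A D x : dtree_ok adj P A D -> x \in A -> x \in S -> 0 < cnt D x.
Proof.
move=> ok xA xS; rewrite /cnt -has_count; apply/hasP; exists x => //.
exact: dpath_in ok xA.
Qed.

Lemma cnt_root v ch : cnt (Node v ch) v = (v \in S).
Proof. by rewrite /cnt /= eqxx /= addn0. Qed.

Lemma cnt_child A v ch d x : dtree_ok adj P A (Node v ch) -> List.In d ch ->
  x \in dverts d -> cnt (Node v ch) x = (v \in S) + cnt d x.
Proof. by move=> ok hd xd; rewrite /cnt (dpath_child adj_sym ok hd xd). Qed.

Lemma Qlemma D A : dtree_ok adj P A D -> connected adj A ->
  forall u v, u \in A -> v \in A -> u \in S -> v \in S -> u != v ->
  cnt D u = cnt D v ->
  exists p z, [/\ path adj u p, last u p = v, uniq (u :: p), z \in p & z != v]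
    /\ {subset p <= A} /\ (z \notin S \/ cnt D z < cnt D v).
Proof.
elim/dtree_ind2: D A => w ch IH A ok Ac u v uA vA uS vS uv ceq.
have cntc : forall x, x \in A -> x != w -> x \in S ->
    exists d, [/\ List.In d ch, x \in dverts d, cnt (Node w ch) x = (w \in S) + cnt d x
                & 0 < cnt d x].
  move=> x xA xw xS; have [d [hd xd]] := child_of ok xA xw.
  exists d; split => //; first exact: cnt_child ok hd xd.
  have [_ okd] := ok_child ok hd; apply: cnt_pos okd _ xS; by rewrite dsetE.
case: (eqVneq u w) => [E|uw].
  subst u; have vw : v != w by rewrite eq_sym.
  have [d [_ _ h1 h2]] := cntc v vA vw vS.
  by move: ceq h2; rewrite cnt_root h1 uS; clear; lia.
case: (eqVneq v w) => [E|vw].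
  subst v; have [d [_ _ h1 h2]] := cntc u uA uw uS.
  by move: ceq h2; rewrite cnt_root h1 vS; clear; lia.
have [d1 [hd1 ud1 cu pu]] := cntc u uA uw uS.
have [d2 [hd2 vd2 cv pv]] := cntc v vA vw vS.
have [c1 ok1] := ok_child ok hd1; have [c2 ok2] := ok_child ok hd2.
case: (eqVneq (dset d1) (dset d2)) => [E|ne].
  have vd1 : v \in dverts d1 by rewrite -dsetE E dsetE.
  have cv1 := cnt_child ok hd1 vd1.
  have ud1' : u \in dset d1 by rewrite dsetE.
  have vd1' : v \in dset d1 by rewrite dsetE.
  have ceq1 : cnt d1 u = cnt d1 v by move: ceq; rewrite cu cv1; clear; lia.
  have [p [z [[h1 h2 h3 h4 h5] [h6 h7]]]] :=
    IH d1 hd1 _ ok1 (comps_connected adj_sym c1) u v ud1' vd1' uS vS uv ceq1.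
  exists p, z; split => //; split.
    move=> y /h6; rewrite dsetE => yd.
    by have := child_sub ok hd1 yd; rewrite !inE => /andP[].
  have zd1 : z \in dverts d1 by rewrite -dsetE; apply: h6.
  rewrite (cnt_child ok hd1 zd1) cv1.
  by case: h7 => [->|h]; [left|right; move: h; clear; lia].
have [p [pth lp up]] := upath (Ac _ _ uA vA).
have sp := path_restr_in pth.
exists p, w; split; last split; last first.
- case wS : (w \in S); [right | by left].
  by rewrite cnt_root cv wS; move: pv; clear; lia.
- exact: sp.
- split => //; first by apply: sub_path pth => x y /and3P[].
  apply/negPn/negP => wp.
  have uAw : u \in A :\ w by rewrite !inE uw uA.
  have pth' : path (restr adj (A :\ w)) u p.
    apply: path_restr_mem pth uAw _ => y yp; rewrite !inE sp // andbT.
    by apply/negP => /eqP E; rewrite -E yp in wp.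
  have cuv : connect (restr adj (A :\ w)) u v by apply/connectP; exists p.
  have E1 : dset d1 = cls adj (A :\ w) u.
    by apply: (@comps_disj _ _ adj_sym _ _ _ u c1 (cls_comps adj uAw));
       rewrite ?dsetE ?cls_in.
  have vd1 : v \in dset d1 by rewrite E1 inE cuv andbT !inE vw vA.
  have E2 : dset d1 = dset d2.
    by apply: (@comps_disj _ _ adj_sym _ _ _ v c1 c2) => //; rewrite dsetE.
  by rewrite E2 eqxx in ne.
by rewrite eq_sym.
Qed.

Definition lab D m x := if x \in S then m.+1 - cnt D x else m.+1.

Lemma ranking_of A D m : dtree_ok adj P A D -> connected adj A -> S \subset A ->
  (forall x, x \in S -> cnt D x <= m) ->
  is_ranking adj S (lab D m) /\ nlabels S (lab D m) <= m.
Proof.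
move=> ok Ac SA bnd.
have pos : forall x, x \in S -> 0 < cnt D x.
  by move=> x xS; apply: cnt_pos ok (subsetP SA x xS) xS.
split; first split.
- by move=> x xS; rewrite /lab xS; have := bnd x xS; clear; lia.
- move=> u v uS vS uv; rewrite /lab /= uS vS => leq.
  have ceq : cnt D u = cnt D v.
    by move: leq; have := bnd u uS; have := bnd v vS; have := pos u uS; have := pos v vS; clear; lia.
  have [p [z [[h1 h2 h3 h4 h5] [_ h7]]]] :=
    Qlemma ok Ac (subsetP SA u uS) (subsetP SA v vS) uS vS uv ceq.
  exists p, z; split => //; first by rewrite h4 h5.
  case zS : (z \in S).
    case: h7; first by rewrite zS.
    by move=> h; move: h; have := bnd v vS; clear; lia.
  by have := pos v vS; clear; lia.
- rewrite /nlabels -[X in _ <= X](size_iota 1 m); apply: uniq_leq_size; first exact: undup_uniq.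
  move=> y; rewrite mem_undup => /mapP [x]; rewrite mem_enum => xS ->.
  rewrite mem_iota /lab xS; have := bnd x xS; have := pos x xS; clear; lia.
Qed.

End Rank.

Section Upper.
Variable V : finType.
Variable adj : rel V.
Hypothesis adj_sym : symmetric adj.
Variable S : {set V}.
Variable l : V -> nat.

Definition rankP := fun (v : V) (B : {set V}) => [forall x in B, (x != v) ==> (l x < l v)].

Definition nlab (A : {set V}) := size (undup (map l (enum A))).

Lemma nlab_lt (A B : {set V}) v : v \in A -> B \subset A :\ v ->
  (forall y, y \in B -> l y < l v) -> (nlab B).+1 <= nlab A.
Proof.
move=> vA sB lt.
have -> : (nlab B).+1 = size (l v :: undup (map l (enum B))) by [].
apply: uniq_leq_size.
  rewrite /= undup_uniq andbT mem_undup; apply/negP => /mapP [y].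
  by rewrite mem_enum => yB E; have := lt y yB; rewrite -E ltnn.
move=> z; rewrite inE mem_undup => /orP[/eqP ->|/mapP [y]].
  by rewrite mem_undup; apply: map_f; rewrite mem_enum.
rewrite mem_enum => yB ->; rewrite mem_undup; apply: map_f; rewrite mem_enum.
by have := subsetP sB y yB; rewrite !inE => /andP[].
Qed.

Variable R : realType.
Variable c : V -> R.
Variable b1 : R.
Hypothesis cb : forall x, x \in S -> (c x <= b1)%R.
Hypothesis c0 : forall x, (0 <= c x)%R.

Lemma upper (D : dtree V) (A : {set V}) : A \subset S -> dtree_ok adj rankP A D ->
  forall x, (\sum_(u <- dpath D x) c u <= b1 * (nlab A)%:R)%R.
Proof.
elim/dtree_ind2: D A => v ch IH A AS ok x.
have [vA Pv] := ok_root ok.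
have b0 : (0 <= b1)%R by apply: le_trans (c0 v) (cb (subsetP AS v vA)).
have L1 : 0 < nlab A.
  rewrite /nlab lt0n size_eq0; apply/eqP => E.
  have : l v \in undup (map l (enum A)) by rewrite mem_undup map_f // mem_enum.
  by rewrite E.
case: (dpath_cases adj_sym x ok) => [->|[d [hd xd _ ->]]].
  rewrite big_seq1; apply: le_trans (cb (subsetP AS v vA)) _.
  by rewrite -{1}(mulr1 b1) ler_wpM2l // ler1n.
have [cd okd] := ok_child ok hd.
have sd := comps_sub cd.
have Ld : (nlab (dset d)).+1 <= nlab A.
  apply: (nlab_lt vA sd) => y yd.
  have := subsetP sd y yd; rewrite !inE => /andP[yv yA].
  by move/forall_inP: Pv => /(_ y yA); rewrite yv.
rewrite big_cons.
have h := IH d hd (dset d) (subset_trans sd (subset_trans (subsetDl _ _) AS)) okd x.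
apply: le_trans (lerD (cb (subsetP AS v vA)) h) _.
rewrite -{1}(mulr1 b1) -mulrDr ler_wpM2l // addrC natr1 ler_nat.
exact: Ld.
Qed.

End Upper.


Section Build.
Variable V : finType.
Variable adj : rel V.
Hypothesis adj_sym : symmetric adj.
Hypothesis adj_acyc : forall s : seq V, uniq s -> 2 < size s -> ~~ cycle adj s.
Variable P : V -> {set V} -> bool.
Hypothesis Ptrue : forall v B, P v B.

Lemma build_list (Q : dtree V -> Prop) (s : seq {set V}) :
  (forall K, K \in s -> exists d, dtree_ok adj P K d /\ Q d) ->
  exists ds : seq (dtree V), map (@dset V) ds = s /\
    forall d, List.In d ds -> dtree_ok adj P (dset d) d /\ Q d.
Proof.
elim: s => [|K s IH] h; first by exists [::].
have [d [okd Qd]] := h K (mem_head K s).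
have [ds [E hds]] : exists ds : seq (dtree V), map (@dset V) ds = s /\
    forall d, List.In d ds -> dtree_ok adj P (dset d) d /\ Q d.
  by apply: IH => K' K's; apply: h; rewrite inE K's orbT.
exists (d :: ds); split; first by rewrite /= E (ok_dset okd).
move=> d' [<-|hd']; last exact: hds.
by rewrite (ok_dset okd).
Qed.

Lemma build m : forall S : {set V}, connected adj S -> S != set0 -> #|S| < 2 ^ m ->
  exists D, dtree_ok adj P S D /\ forall x, size (dpath D x) <= m.
Proof.
elim: m => [|m IH] S Sc Sne Ssz.
  by move: Sne; rewrite -card_gt0; move: Ssz; rewrite expn0; clear; lia.
have [x0 x0S] := set0Pn _ Sne.
have [v vS hv] := centroid adj_sym adj_acyc Sc x0S.
have hK : forall K, K \in enum (comps adj (S :\ v)) ->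
    exists d, dtree_ok adj P K d /\ (forall x, size (dpath d x) <= m).
  move=> K; rewrite mem_enum => KC.
  have [y yS Ky] := comps_cls KC.
  apply: IH.
  - by move=> a b; apply: (comps_connected adj_sym KC).
  - by apply/set0Pn; exists y; rewrite Ky cls_in.
  - by move: (hv K KC) Ssz; rewrite expnS; clear; lia.
have [ds [E hds]] := build_list hK.
have ok : dtree_ok adj P S (Node v ds).
  by rewrite /= vS Ptrue E perm_refl /=; apply: In_all => d hd; exact: (proj1 (hds d hd)).
exists (Node v ds); split => // x.
case: (dpath_cases adj_sym x ok) => [->|[d [hd _ _ ->]]] //=.
by have := (proj2 (hds d hd)) x.
Qed.

End Build.


Section Fin.
Variable R : realType.
Variable V : finType.
Variable c : V -> R.
Hypothesis c0 : forall u, (0 <= c u)%R.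

Lemma sum_count (S : {set V}) (a : R) s : (0 <= a)%R -> (forall u, u \in S -> a <= c u)%R ->
  (a * (count (mem S) s)%:R <= \sum_(u <- s) c u)%R.
Proof.
move=> a0 ha; elim: s => [|u s IH]; first by rewrite big_nil mulr0.
rewrite big_cons /= natrD mulrDr; apply: lerD => //.
case uS : (u \in S) => /=; first by rewrite mulr1 ha.
by rewrite mulr0.
Qed.

Lemma sum_mem x s : x \in s -> (c x <= \sum_(u <- s) c u)%R.
Proof.
move=> xs; rewrite (big_rem x) //= -{1}(addr0 (c x)) lerD //.
exact: sumr_ge0.
Qed.

Lemma dcost_ge (A : {set V}) D x : x \in A -> (\sum_(u <- dpath D x) c u <= dcost c A D)%R.
Proof. move=> xA; rewrite /dcost; exact: (le_bigmax_cond _ _ xA). Qed.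

Lemma dcost_le (A : {set V}) D (M : R) : (0 <= M)%R ->
  (forall x, x \in A -> \sum_(u <- dpath D x) c u <= M)%R -> (dcost c A D <= M)%R.
Proof. by move=> M0 h; rewrite /dcost; apply: bigmax_le. Qed.

End Fin.

Theorem lemma9 (R : realType) (V : finType) (adj : rel V) (c : V -> R)
    (S : {set V}) (a b : R) (l : V -> nat) (D : dtree V) :
  is_tree adj ->
  (forall v, (0 < c v)%R) ->
  (forall v, (c v <= 1)%R) -> (exists v, c v = 1%R) ->
  is_subtree adj S ->
  (0 < a)%R -> (a < b)%R ->
  (forall v, v \in S -> (c v <= b)%R) ->
  (b <= 2 * a)%R ->
  ((b * (ln (#|V|%:R : R) / ln 2) <= 1)%R \/ (forall v, v \in S -> (a < c v)%R)) ->
  is_opt_ranking adj S l ->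
  is_rank_dtree adj l S D ->
  forall D' : dtree V, is_dtree adj [set: V] D' ->
  (dcost c S D <= 2 * dcost c [set: V] D')%R.
Proof.
move=> [asym airr aconn aacyc] cpos c1 [v1 cv1] [Sne Sc] a0 ab cb b2a hyp
  [lrank lopt] rD D' okD'.
have c0 : forall u, (0 <= c u)%R by move=> u; apply/ltW.
have b0 : (0 < b)%R by apply: lt_trans a0 ab.
set k := nlabels S l.
have up : forall b1 : R, (forall x, x \in S -> c x <= b1)%R ->
    (dcost c S D <= b1 * k%:R)%R.
  move=> b1 cb1; have [x0 x0S] := set0Pn _ Sne.
  have b10 : (0 <= b1)%R by apply: le_trans (c0 x0) (cb1 x0 x0S).
  apply: dcost_le; first by rewrite mulr_ge0.
  move=> x xS; exact: (upper asym cb1 c0 (subxx S) rD x).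
have rk : forall P A (D0 : dtree V) m, dtree_ok adj P A D0 -> connected adj A ->
    S \subset A -> (forall x, x \in S -> cnt S D0 x <= m) -> k <= m.
  move=> P A D0 m ok Ac SA bnd.
  have [r1 r2] := ranking_of asym ok Ac SA bnd.
  exact: leq_trans (lopt _ r1) r2.
have Tc : connected adj [set: V].
  move=> x y _ _; rewrite (eq_connect (e' := adj)) ?aconn //.
  by move=> u w; rewrite /restr /= !inE.
case: hyp => [hlog | hac]; last first.
  pose m := \max_(x in S) cnt S D' x.
  have km : k <= m.
    apply: (rk _ _ _ m okD' Tc (subsetT S)) => x xS.
    exact: (@leq_bigmax_cond _ (fun x => x \in S) (fun x => cnt S D' x) x xS).
  have S0 : 0 < #|S| by rewrite card_gt0.
  have [xm xmS xmE] := eq_bigmax_cond (fun x => cnt S D' x) S0.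
  have h1 : (a * m%:R <= dcost c [set: V] D')%R.
    rewrite /m xmE; apply: le_trans _ (dcost_ge c D' (in_setT xm)).
    apply: sum_count => //; [exact: ltW | move=> u uS; exact: ltW (hac u uS)].
  apply: le_trans (up b cb) _.
  apply: le_trans (_ : b * k%:R <= (2 * a) * m%:R)%R _.
    by apply: ler_pM => //; [exact: ltW | rewrite ler_nat].
  by rewrite -mulrA ler_pM2l.
have S0 : 0 < #|S| by rewrite card_gt0.
set t := trunc_log 2 #|S|.
have [D'' [ok'' sz]] := @build _ _ asym aacyc (fun _ _ => true) (fun _ _ => erefl) t.+1 S
   Sc Sne (trunc_log_ltn #|S| (isT : 1 < 2)).
have kM : k <= t.+1.
  apply: (rk _ _ _ t.+1 ok'' Sc (subxx S)) => x _.
  exact: leq_trans (count_size _ _) (sz x).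
have dc1 : (1 <= dcost c [set: V] D')%R.
  apply: le_trans _ (dcost_ge c D' (in_setT v1)); rewrite -cv1; apply: sum_mem => //.
  exact: (dpath_in asym okD' (in_setT v1)).
set b1 := Num.min b 1%R.
have cb1 : forall x, x \in S -> (c x <= b1)%R by move=> x xS; rewrite le_min cb // c1.
have b1b : (b1 <= b)%R by rewrite ge_min lexx.
have b11 : (b1 <= 1)%R by rewrite ge_min lexx orbT.
have b10 : (0 <= b1)%R by rewrite le_min (ltW b0) ler01.
apply: le_trans (up b1 cb1) _.
suff h : (b1 * k%:R <= 2)%R.
  by apply: le_trans h _; rewrite -{1}(mulr1 (2:R)%R) ler_wpM2l.
have l2 : (0 < ln (2 : R))%R by apply: ln_gt0; rewrite ltr1n.
have V0 : 0 < #|V| by apply: leq_trans S0 (max_card _).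
have tb : ((t%:R : R) <= ln (#|V|%:R : R) / ln 2)%R.
  rewrite ler_pdivlMr // mulr_natl -lnXn // ler_ln ?posrE ?exprn_gt0 ?ltr0n //.
  rewrite -natrX ler_nat; apply: leq_trans (trunc_logP (isT : 1 < 2) S0) (max_card _).
have hbt : (b * t%:R <= 1)%R by apply: le_trans (ler_wpM2l (ltW b0) tb) hlog.
apply: le_trans (_ : b1 * k%:R <= b1 * t.+1%:R)%R _; first by rewrite ler_wpM2l // ler_nat.
rewrite -natr1 mulrDr mulr1.
have : (b1 * t%:R <= b * t%:R)%R by rewrite ler_wpM2r.
move: hbt b11; clear; lra.
Qed.
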